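(* Let $G$ be a strongly Deza graph with parameters $(n,k,b,a)$ having exactly four distinct eigenvalues $k,\theta_2,\theta_3,\theta_4$ with multiplicities $1,m_2,m_3,m_4$ (all positive), where $\theta_4=-\theta_3$ and $m_3=m_4$. Then $\theta_2=-k/m_2$ is an integer with $\theta_2\leqslant -1$, and $$\theta_{3,4}=\pm\sqrt{k\left(1+\frac{(\theta_2+1)(m_2+1)}{n-m_2-1}\right)}.$$
   Context: All graphs are finite, simple and undirected; eigenvalues of a graph are those of its adjacency matrix. A Deza graph with parameters $(n,k,b,a)$, where $b\geqslant a$, is a $k$-regular graph on $n$ vertices, which is neither complete nor edgeless, such that any two distinct vertices have exactly $b$ or exactly $a$ common neighbours. If $b>a$, the children $G_A$ and $G_B$ of $G$ are the graphs on the vertex set of $G$ in which two distinct vertices are adjacent if and only if they have exactly $a$ (for $G_A$), respectively exactly $b$ (for $G_B$), common neighbours in $G$; if $b=a$, $G_A$ is the complete graph and $G_B$ is the edgeless graph. A strongly regular graph with parameters $(n,k,\lambda,\mu)$ is a $k$-regular graph on $n$ vertices, neither complete nor edgeless, in which any two adjacent vertices have exactly $\lambda$ common neighbours and any two distinct non-adjacent vertices have exactly $\mu$ common neighbours (disconnected examples, i.e. disjoint unions of at least two cliques of equal size, are allowed). A strongly Deza graph is a Deza graph both of whose children are strongly regular graphs. *)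

(* Defs.v *)
From mathcomp Require Import all_boot all_order all_algebra all_field.
From mathcomp Require Import algC.
Set Implicit Arguments. Unset Strict Implicit. Unset Printing Implicit Defensive.
Import GRing.Theory Num.Theory.

Definition is_graph (T : finType) (e : rel T) : Prop :=
  symmetric e /\ irreflexive e.

Definition common (T : finType) (e : rel T) (x y : T) : nat :=
  #|[set z | e x z && e y z]|.

Definition regular (T : finType) (e : rel T) (k : nat) : Prop :=
  forall x, #|[set y | e x y]| = k.

Definition complete (T : finType) (e : rel T) : Prop :=
  forall x y, x != y -> e x y.

Definition edgeless (T : finType) (e : rel T) : Prop :=
  forall x y, ~~ e x y.

Definition deza (T : finType) (e : rel T) (n k b a : nat) : Prop :=
  is_graph e /\ #|T| = n /\ regular e k /\ ~ complete e /\ ~ edgeless e /\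
  a <= b /\
  (forall x y, x != y -> common e x y = b \/ common e x y = a).

(* Children G_A and G_B (when b = a: G_A complete, G_B edgeless). *)
Definition childA (T : finType) (e : rel T) (b a : nat) : rel T :=
  fun x y => (x != y) && ((b == a) || (common e x y == a)).
Definition childB (T : finType) (e : rel T) (b a : nat) : rel T :=
  fun x y => [&& x != y, b != a & common e x y == b].

Definition srg (T : finType) (e : rel T) (n k l m : nat) : Prop :=
  is_graph e /\ #|T| = n /\ regular e k /\ ~ complete e /\ ~ edgeless e /\
  (forall x y, x != y -> e x y -> common e x y = l) /\
  (forall x y, x != y -> ~~ e x y -> common e x y = m).

Definition strongly_regular (T : finType) (e : rel T) : Prop :=
  exists n k l m, srg e n k l m.

Definition strongly_deza (T : finType) (e : rel T) (n k b a : nat) : Prop :=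
  [/\ deza e n k b a, strongly_regular (childA e b a)
                    & strongly_regular (childB e b a)].

Definition adjmx (n : nat) (e : rel 'I_n) : 'M[algC]_n :=
  \matrix_(i, j) ((e i j)%:R)%R.

(* Main.v *)
Require Import Defs.
From mathcomp Require Import all_boot all_order all_algebra all_field.
From mathcomp Require Import algC algnum.
From mathcomp Require Import ring.
Import GRing.Theory Num.Theory.
Local Open Scope ring_scope.

Lemma char_poly_conj (F : fieldType) n (P A : 'M[F]_n) : P \in unitmx ->
  char_poly (P *m A *m invmx P) = char_poly A.
Proof.
move=> Pu; rewrite /char_poly /char_poly_mx.
set Q := map_mx polyC P; set Q' := map_mx polyC (invmx P).
have QQ' : Q *m Q' = 1%:M by rewrite -map_mxM mulmxV // map_mx1.
have -> : 'X%:M - map_mx polyC (P *m A *m invmx P) =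
   Q *m ('X%:M - map_mx polyC A) *m Q'.
  rewrite mulmxBr mulmxBl !map_mxM -!mulmxA; congr (_ - _).
  by rewrite mulmxA scalar_mxC -mulmxA QQ' mulmx1.
rewrite !det_mulmx mulrAC -det_mulmx QQ' det1 mul1r //.
Qed.

Lemma trig_sq_diag (R : comNzRingType) n (T : 'M[R]_n) i :
  is_trig_mx T -> (T *m T) i i = T i i ^+ 2.
Proof.
move=> /is_trig_mxP Ht; rewrite mxE (bigD1 i) //= big1 ?addr0 ?expr2 //.
move=> j /negPf jn; case: (ltngtP i j) => [lt|lt|/val_inj eq].
- by rewrite Ht // mul0r.
- by rewrite (Ht j i) // mulr0.
- by rewrite eq eqxx in jn.
Qed.

Lemma spec_traces n (A : 'M[algC]_n) (r : seq algC) :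
  char_poly A = \prod_(x <- r) ('X - x%:P) ->
  [/\ size r = n, \tr A = \sum_(x <- r) x &
      \tr (A *m A) = \sum_(x <- r) x ^+ 2].
Proof.
move=> Hc.
have Hs : size r = n.
  by have := size_char_poly A; rewrite Hc size_prod_XsubC => -[].
case: n A Hc Hs => [|n] A Hc Hs.
  by move: Hs; case: r {Hc} => // _; rewrite /mxtrace !big_ord0 !big_nil.
have [P /unitarymx_unit Pu Ht] := Schur A (ltn0Sn n).
move: Ht; rewrite /similar_to conjumx // => Ht.
set T := P *m A *m invmx P in Ht.
have HT : char_poly T = \prod_(x <- [seq T i i | i <- enum 'I_n.+1]) ('X - x%:P).
  by rewrite char_poly_trig // big_map big_enum.
have Hp : perm_eq [seq T i i | i <- enum 'I_n.+1] r.
  by apply: prod_XsubC_eq; rewrite -HT char_poly_conj.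
have trT : \tr A = \tr T.
  by rewrite /T mxtrace_mulC mulmxA mulVmx // mul1mx.
have trT2 : \tr (A *m A) = \tr (T *m T).
  rewrite /T -!mulmxA mulKmx // !mulmxA [RHS]mxtrace_mulC.
  by rewrite -!mulmxA mulKmx.
split => //.
  by rewrite trT -(perm_big _ Hp) big_map big_enum.
rewrite trT2 -(perm_big _ Hp) big_map big_enum /mxtrace.
by apply: eq_bigr => i _; rewrite trig_sq_diag.
Qed.

Lemma prod_nseq (R : comNzRingType) m (a : R) (f : R -> {poly R}) :
  \prod_(x <- nseq m a) f x = f a ^+ m.
Proof. by rewrite big_nseq; elim: m => [|m IH] //=; rewrite IH exprS. Qed.

Lemma sum_nseq (R : comNzRingType) m (a : R) (f : R -> R) :
  \sum_(x <- nseq m a) f x = f a *+ m.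
Proof. by rewrite big_nseq; elim: m => [|m IH] //=; rewrite IH mulrS. Qed.

Theorem theorem6 (n : nat) (e : rel 'I_n) (k b a : nat)
    (t2 t3 t4 : algC) (m2 m3 m4 : nat) :
  strongly_deza e n k b a ->
  (0 < m2)%N -> (0 < m3)%N -> (0 < m4)%N ->
  uniq [:: k%:R; t2; t3; t4] ->
  char_poly (adjmx e) =
    ('X - (k%:R)%:P) * ('X - t2%:P) ^+ m2 * ('X - t3%:P) ^+ m3
      * ('X - t4%:P) ^+ m4 ->
  t4 = - t3 -> m3 = m4 ->
  [/\ t2 = - (k%:R) / m2%:R, t2 \in Num.int, t2 <= -1 &
      let s := sqrtC (k%:R * (1 + (t2 + 1) * (m2%:R + 1)
                                  / (n%:R - m2%:R - 1))) in
      (t3 = s /\ t4 = - s) \/ (t3 = - s /\ t4 = s)].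
Proof.
move=> [[[Hsym Hirr] [Hn [Hreg [Hnc [Hne [Hab Hcm]]]]]] _ _] m2p m3p m4p _ Hchar Ht4 Hm34.
set r := k%:R :: (nseq m2 t2 ++ nseq m3 t3 ++ nseq m4 t4).
have Hr : char_poly (adjmx e) = \prod_(x <- r) ('X - x%:P).
  by rewrite Hchar big_cons !big_cat /= !prod_nseq !mulrA.
have [Hs Htr Htr2] := spec_traces _ _ _ Hr.
have tr1 : \tr (adjmx e) = 0.
  by rewrite /mxtrace big1 // => i _; rewrite mxE Hirr.
have rowsum : forall i, \sum_j (adjmx e i j) = k%:R.
  move=> i; under eq_bigr do rewrite mxE.
  rewrite -natr_sum -(Hreg i) -sum1dep_card.
  by congr (_%:R); rewrite [RHS]big_mkcond; apply: eq_bigr => j _; case: (e i j).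
have tr2 : \tr (adjmx e *m adjmx e) = k%:R *+ n.
  rewrite /mxtrace -[n in RHS]card_ord -sumr_const.
  apply: eq_bigr => i _; rewrite mxE -(rowsum i); apply: eq_bigr => j _.
  by rewrite !mxE (Hsym j i); case: (e i j); rewrite ?mul1r ?mul0r.
rewrite tr1 big_cons !big_cat /= !sum_nseq in Htr.
rewrite tr2 big_cons !big_cat /= !sum_nseq in Htr2.
rewrite /r /= !size_cat !size_nseq in Hs.
subst t4 m4.
have m2nz : (m2%:R : algC) != 0 by rewrite pnatr_eq0 -lt0n.
have m3nz : (m3%:R : algC) != 0 by rewrite pnatr_eq0 -lt0n.
have kp : (0 < k)%N.
  rewrite lt0n; apply/eqP => k0; apply: Hne => x y; apply/negP => exy.
  have : y \in [set y | e x y] by rewrite inE.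
  by rewrite (cards0_eq (etrans (Hreg x) k0)) inE.
have E1 : k%:R + t2 * m2%:R = 0.
  by move: Htr; rewrite mulNrn subrr addr0 -mulr_natr => H; rewrite [RHS]H !mulr_natr.
have Ht2 : t2 = - (k%:R) / m2%:R.
  apply: (mulIf m2nz); rewrite mulfVK //; apply/eqP; rewrite -subr_eq0 opprK.
  by rewrite addrC E1.
have t2int : t2 \in Num.int.
  apply: Cint_rat_Aint.
    by rewrite Ht2 rpredM ?rpredN ?rpredV ?rpred_nat.
  apply: (@root_monic_Aint (char_poly (adjmx e))).
  - apply/rootP; rewrite Hchar !hornerE subrr expr0n.
    by rewrite eqn0Ngt m2p /= !(mulr0, mul0r).
  - exact: char_poly_monic.
  - pose B : 'M[int]_n := \matrix_(i, j) (e i j)%:R.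
    have -> : adjmx e = map_mx intr B.
      by apply/matrixP => i j; rewrite !mxE; case: (e i j).
    rewrite -map_char_poly; apply/polyOverP => i; rewrite coef_map.
    exact: intr_int.
split => //.
  move/intrP: t2int => [z Hz].
  have : t2 < 0.
    by rewrite Ht2 mulNr oppr_lt0 divr_gt0 // ltr0n.
  rewrite Hz ltrz0 => zn.
  have -> : (-1 : algC) = (-1 : int)%:~R by rewrite rmorphN1.
  by rewrite ler_int -ltzD1 addrC subrr.
move=> s.
have Hd : (n%:R : algC) - m2%:R - 1 = 2 * m3%:R.
  by rewrite -Hs -add1n !natrD; ring.
have E2 : t3 ^+ 2 = (n%:R * k%:R - k%:R ^+ 2 - m2%:R * t2 ^+ 2) / (2 * m3%:R).
  apply: (mulIf (_ : 2 * m3%:R != 0)).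
    by rewrite mulf_neq0 // pnatr_eq0.
  rewrite mulfVK; last by rewrite mulf_neq0 // pnatr_eq0.
  move: Htr2; rewrite sqrrN -[k%:R *+ n]mulr_natr -[t2 ^+ 2 *+ m2]mulr_natr.
  rewrite -[t3 ^+ 2 *+ m3]mulr_natr => H.
  rewrite [n%:R * k%:R]mulrC H; ring.
have Hsq : t3 ^+ 2 = s ^+ 2.
  rewrite /s sqrtCK E2 Hd.
  have Hk : (k%:R : algC) = - t2 * m2%:R by rewrite Ht2 mulNr opprK mulfVK.
  rewrite -Hs -add1n !natrD Hk; field.
  exact: m3nz.
have : (t3 - s) * (t3 + s) == 0 by rewrite -subr_sqr Hsq subrr.
rewrite mulf_eq0 => /orP[|] /eqP H.
  by left; move/eqP: H; rewrite subr_eq0 => /eqP ->.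
right; move/eqP: H; rewrite addr_eq0 => /eqP ->; by rewrite opprK.
Qed.
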